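(* The fully shifted sub-local transition function $\underline{\delta}:\mathrm{Sub}\to\mathrm{Conf}$ is the right Kan extension of the fully shifted local transition function $\overline{\delta}:\mathrm{Loc}\to\mathrm{Conf}$ along the inclusion $i:\mathrm{Loc}\to\mathrm{Sub}$. That is, $\underline{\delta}$ is monotonic, $\underline{\delta}\circ i\Rightarrow\overline{\delta}$, and for every monotonic $f:\mathrm{Sub}\to\mathrm{Conf}$ with $f\circ i\Rightarrow\overline{\delta}$ we have $f\Rightarrow\underline{\delta}$.
   Context: A cellular automaton is given by a group $G$, a neighborhood $N\subseteq G$ (not necessarily finite), a finite set of states $Q$ and $\delta:Q^N\to Q$. $\mathrm{Conf}$ is the set of partial functions $G\to Q$ with support $|c|$; $c\restriction S$ is restriction to $S\cap|c|$; $\mathrm{Conf}$ is partially ordered by $c\preceq c'$ iff for all $g\in|c|$, $g\in|c'|$ and $c(g)=c'(g)$. For $c\in\mathrm{Conf}$, $g\in G$, $c\blacktriangleleft g$ has support $\{h\mid g\cdot h\in|c|\}$ and $(c\blacktriangleleft g)(h)=c(g\cdot h)$. $g\cdot M=\{g\cdot m\mid m\in M\}$. $c_g=c\restriction(g\cdot N\cap|c|)$; $\det(c)=\{g\in G\mid \exists q\in Q\ \forall c'\in Q^{g\cdot N}:\ c'\restriction|c_g|=c_g\implies \delta(c'\blacktriangleleft g)=q\}$ and $q_{c,g}$ is the unique such $q$. $\mathrm{Loc}=\bigcup_{g\in G}(\{g\}\times Q^{g\cdot N})$ with the trivial order (equality); $\overline{\delta}(g,c)$ is the configuration with support $\{g\}$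 and value $\delta(c\blacktriangleleft g)$. $\mathrm{Sub}=\bigcup_{g\in G,\,M\subseteq N}(\{g\}\times Q^{g\cdot M})$ ordered by $(g,c)\preceq(g',c')$ iff $g=g'$ and $c\preceq c'$; $\mathrm{Loc}\subseteq\mathrm{Sub}$. $\underline{\delta}(g,c)$ is the configuration with support $\{g\}\cap\det(c)$ and, if $g\in\det(c)$, value $q_{c,g}$. For posets $X,Y$, $f:X\to Y$ is monotonic if $x\preceq x'\Rightarrow f(x)\preceq f(x')$; for monotonic $f,f'$, $f\Rightarrow f'$ iff $f(x)\preceq f'(x)$ for all $x$. Given posets $A,B,C$ and monotonic $i:A\to B$, $f:A\to C$, a monotonic $g:B\to C$ is the right Kan extension of $f$ along $i$ if it is the $\Rightarrow$-maximum of $\{h:B\to C\text{ monotonic}\mid h\circ i\Rightarrow f\}$. *)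

(* Defs.v *)
From mathcomp Require Import all_boot.
From Stdlib Require Import ClassicalDescription ClassicalEpsilon.

Set Implicit Arguments.
Unset Strict Implicit.

Record group := Group {
  gcar :> Type;
  gmul : gcar -> gcar -> gcar;
  gone : gcar;
  ginv : gcar -> gcar;
  gmulA : forall x y z, gmul x (gmul y z) = gmul (gmul x y) z;
  gmul1 : forall x, gmul gone x = x;
  gmulV : forall x, gmul (ginv x) x = gone }.

Definition monotone {X Y : Type} (leX : X -> X -> Prop) (leY : Y -> Y -> Prop)
  (f : X -> Y) : Prop := forall x x', leX x x' -> leY (f x) (f x').

Definition nat_le {X Y : Type} (leY : Y -> Y -> Prop) (f f' : X -> Y) : Prop :=
  forall x, leY (f x) (f' x).

Definition right_Kan {A B C : Type} (leA : A -> A -> Prop) (leB : B -> B -> Prop)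
  (leC : C -> C -> Prop) (i : A -> B) (f : A -> C) (g : B -> C) : Prop :=
  [/\ monotone leA leB i, monotone leA leC f,
      monotone leB leC g,
      nat_le leC (fun a => g (i a)) f &
      forall h : B -> C, monotone leB leC h ->
        nat_le leC (fun a => h (i a)) f -> nat_le leC h g].

Section CA.
Variables (G : group) (Q : finType) (N : G -> Prop)
          (delta : ({h : G | N h} -> Q) -> Q).

Definition Conf := G -> option Q.
Definition supp (c : Conf) : G -> Prop := fun x => c x <> None.
Definition has_supp (c : Conf) (S : G -> Prop) := forall x, supp c x <-> S x.
Definition restr (c : Conf) (S : G -> Prop) : Conf :=
  fun x => if excluded_middle_informative (S x) then c x else None.
Definition conf_le (c c' : Conf) : Prop :=
  forall g, supp c g -> supp c' g /\ c g = c' g.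
Definition shift (c : Conf) (g : G) : Conf := fun h => c (gmul g h).
Definition lmul (g : G) (M : G -> Prop) : G -> Prop :=
  fun x => exists m, M m /\ x = gmul g m.

(* Loc and Sub: pairs (g, c) with c ∈ Q^{g·N}, resp. c ∈ Q^{g·M}, M ⊆ N. *)
Definition is_Loc (p : G * Conf) : Prop := has_supp p.2 (lmul p.1 N).
Definition Loc := {p : G * Conf | is_Loc p}.
Definition is_Sub (p : G * Conf) : Prop :=
  exists M : G -> Prop, (forall x, M x -> N x) /\ has_supp p.2 (lmul p.1 M).
Definition Sub := {p : G * Conf | is_Sub p}.

Definition Loc_le (x y : Loc) : Prop := x = y.
Definition Sub_le (x y : Sub) : Prop :=
  (sval x).1 = (sval y).1 /\ conf_le (sval x).2 (sval y).2.

Lemma Loc_Sub (p : G * Conf) : is_Loc p -> is_Sub p.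
Proof. by move=> H; exists N; split. Qed.

Definition incl (x : Loc) : Sub := exist _ (sval x) (Loc_Sub (proj2_sig x)).

Lemma shift_total (g : G) (c : Conf) :
  has_supp c (lmul g N) -> forall h, N h -> supp (shift c g) h.
Proof. by move=> H h Nh; apply/H; exists h. Qed.

Definition conf_val (c : Conf) (M : G -> Prop) (H : forall h, M h -> supp c h)
  : {h : G | M h} -> Q :=
  fun x => match c (sval x) as o return (o <> None -> Q) with
           | Some q => fun _ => q
           | None => fun E => False_rect _ (E erefl)
           end (H _ (proj2_sig x)).

Definition loc_value (g : G) (c : Conf) (H : has_supp c (lmul g N)) : Q :=
  delta (conf_val (shift_total H)).

Definition delta_bar (x : Loc) : Conf :=
  fun y => if excluded_middle_informative (y = (sval x).1)
           then Some (loc_value (proj2_sig x)) else None.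

Definition c_at (c : Conf) (g : G) : Conf :=
  restr c (fun x => lmul g N x /\ supp c x).

Definition det_with (c : Conf) (g : G) (q : Q) : Prop :=
  forall (c' : Conf) (H : has_supp c' (lmul g N)),
    restr c' (supp (c_at c g)) = c_at c g -> loc_value H = q.

Definition det (c : Conf) (g : G) : Prop := exists q, det_with c g q.

Definition q_cg (c : Conf) (g : G) : option Q :=
  match excluded_middle_informative (det c g) with
  | left H => Some (proj1_sig (constructive_indefinite_description _ H))
  | right _ => None
  end.

Definition delta_under (x : Sub) : Conf :=
  fun y => if excluded_middle_informative (y = (sval x).1)
           then q_cg (sval x).2 (sval x).1 else None.

End CA.

(* Main.v *)
Require Import Defs.
From mathcomp Require Import all_boot.
From Stdlib Require Import ClassicalDescription ClassicalEpsilon FunctionalExtensionality.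

Section Proofs.
Variables (G : group) (Q : finType) (N : G -> Prop)
          (delta : ({h : G | N h} -> Q) -> Q).

Definition extc (c : Conf G Q) (g : G) (d : Q) : Conf G Q :=
  fun x => if excluded_middle_informative (lmul g N x) then
             match c x with Some v => Some v | None => Some d end
           else None.

Lemma extc_supp c g d : has_supp (extc c g d) (lmul g N).
Proof.
move=> x; rewrite /supp /extc; case: excluded_middle_informative => H.
  by split=> // _; case: (c x).
by split.
Qed.

Ltac emi := repeat match goal with
  | |- context[excluded_middle_informative ?P] => destruct (excluded_middle_informative P)
  | H : context[excluded_middle_informative ?P] |- _ => destruct (excluded_middle_informative P)
  end.

Lemma extc_restr c g d :
  restr (extc c g d) (supp (c_at N c g)) = c_at N c g.
Proof.
apply: functional_extensionality => x.
unfold c_at, extc; unfold supp; unfold restr.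
emi; cbn in *; try tauto; try congruence; destruct (c x); try tauto; try congruence.
Qed.

Lemma det_unique c g q1 q2 :
  det_with delta c g q1 -> det_with delta c g q2 -> q1 = q2.
Proof.
move=> H1 H2.
rewrite -(H1 _ (extc_supp c g q1) (extc_restr c g q1)).
exact: (H2 _ (extc_supp c g q1) (extc_restr c g q1)).
Qed.

Lemma q_cg_some c g q : q_cg delta c g = Some q -> det_with delta c g q.
Proof.
rewrite /q_cg; case: excluded_middle_informative => // H [<-].
by case: constructive_indefinite_description.
Qed.

Lemma q_cg_det c g q : det_with delta c g q -> q_cg delta c g = Some q.
Proof.
move=> Hq; rewrite /q_cg; case: excluded_middle_informative => H.
  case: constructive_indefinite_description => q' Hq' /=.
  by rewrite (@det_unique c g q' q Hq' Hq).
by case: H; exists q.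
Qed.

Lemma det_mono c c'' g q :
  conf_le c c'' -> det_with delta c g q -> det_with delta c'' g q.
Proof.
move=> Hle Hq c' H E; apply: (Hq c' H).
apply: functional_extensionality => x.
have Ex := f_equal (fun f => f x) E; move: Ex => /=.
unfold c_at, conf_le in Hle |- *; unfold supp in Hle |- *; unfold restr in *.
have lx := Hle x.
emi; cbn in *; try tauto; try congruence; destruct (c x) eqn:Ecx; try tauto; try congruence.
move=> ->; case: lx => //.
Qed.

Lemma conf_le_trans (a b c : Conf G Q) : conf_le a b -> conf_le b c -> conf_le a c.
Proof.
move=> H1 H2 z Hz; case: (H1 z Hz) => Hb E1; case: (H2 z Hb) => Hc E2.
by split=> //; rewrite E1.
Qed.

Lemma restr_self (c : Conf G Q) g : restr c (supp (c_at N c g)) = c_at N c g.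
Proof.
apply: functional_extensionality => x.
unfold c_at; unfold supp; unfold restr.
emi; cbn in *; tauto.
Qed.

Lemma sub_supp g (c : Conf G Q) : is_Sub N (g, c) -> forall z, c z <> None -> lmul g N z.
Proof.
move=> [M [MN HM]] z Hz; have := (proj1 (HM z) Hz) => -[m [Mm ->]].
by exists m; split=> //; apply: MN.
Qed.

Lemma le_ext g (c c' : Conf G Q) : (forall z, c z <> None -> lmul g N z) ->
  restr c' (supp (c_at N c g)) = c_at N c g -> conf_le c c'.
Proof.
move=> Hs E z Hz.
have Ez := f_equal (fun f => f z) E; move: Ez => /=.
have Hz' := Hs z Hz.
unfold c_at in *; unfold supp in *; unfold restr in *.
emi; cbn in *; try tauto.
by move=> ->.
Qed.

End Proofs.
Arguments det_mono {G Q N delta c c'' g q}.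
Arguments q_cg_some {G Q N delta c g q}.
Arguments q_cg_det {G Q N delta c g q}.
Arguments restr_self {G Q N} c g.
Arguments sub_supp {G Q N g c}.
Arguments le_ext {G Q N g c c'}.
Arguments extc_supp {G Q N} c g d.
Arguments extc_restr {G Q N} c g d.
Arguments conf_le_trans {G Q a b c}.

Theorem mainTheorem15 (G : group) (Q : finType) (N : G -> Prop)
  (delta : ({h : G | N h} -> Q) -> Q) :
  right_Kan (@Loc_le G Q N) (@Sub_le G Q N) (@conf_le G Q)
    (@incl G Q N) (delta_bar delta) (delta_under delta).
Proof.
split.
- by move=> x y ->; split=> // z Hz.
- by move=> x y -> z Hz.
- move=> [[g c] Hc] [[g' c''] Hc''] [/= eg Hle]; subst g'.
  move=> y; rewrite /supp /delta_under /=.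
  case: excluded_middle_informative => // _ /=.
  case Eq: (q_cg delta c g) => [q|] // _.
  by rewrite (q_cg_det (det_mono Hle (q_cg_some Eq))).
- move=> [[g c] Hc] y; rewrite /supp /delta_under /delta_bar /=.
  case: excluded_middle_informative => // _ /=.
  case Eq: (q_cg delta c g) => [q|] // _.
  split=> //; congr Some; symmetry.
  exact: (q_cg_some Eq) c Hc (restr_self c g).
- move=> h hmono hle [[g c] Hc] y.
  set x := exist _ (g, c) Hc.
  have Hs := sub_supp Hc.
  have key : forall c' (H : has_supp c' (lmul g N)), conf_le c c' ->
      forall z, h x z <> None -> z = g /\ h x z = Some (loc_value delta H).
    move=> c' H Hle z Hz.
    pose a := (exist _ (g, c') H : Loc Q N).
    have Hxa : Sub_le x (incl a) by split.
    have := conf_le_trans (hmono _ _ Hxa) (hle a) z Hz.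
    rewrite /delta_bar /supp /=.
    case: excluded_middle_informative => /= [ez [_ ->]|_ [] ] //.
  case Ev: (h x y) => [v|]; last by rewrite /supp Ev.
  move=> _.
  have Hv : h x y <> None by rewrite Ev.
  have [ey _] := key _ (extc_supp c g v) (le_ext Hs (extc_restr c g v)) y Hv.
  subst y.
  have Hd : det_with delta c g v.
    move=> c' H E.
    have [_ ] := key c' H (le_ext Hs E) g Hv.
    by rewrite Ev => -[->].
  rewrite /delta_under /supp /=.
  case: excluded_middle_informative => /= [_|[]] //.
  by rewrite (q_cg_det Hd).
Qed.
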